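(* Assume $E$ is countable, let $\gamma$ be a POS and $\alpha$ a dust-rate matrix for $\gamma$. Let $y\in S$, $x\in S\setminus y_+$, and let $f$ be a bounded $\mathcal F_{S\setminus y_+}$-measurable function. Then $\delta_x(\gamma_y f)=0$ if $x=y$; $\delta_x(\gamma_y f)\le\delta_x(f)$ if $x\in\{y\}^*$; and $\delta_x(\gamma_y f)\le\delta_x(f)+\delta_y(f)\,\alpha_{y,x}$ if $x<y$.
   Context: $(S,\le)$ is a countable partially ordered set. For $x\in S$ write $x_-=\{y\in S:y<x\}$, $x_+=\{y\in S:y>x\}$. For $\Upsilon\subset S$: $\max(\Upsilon)=\{x\in\Upsilon: y\notin\Upsilon\text{ for all }y>x\}$, $\min(\Upsilon)=\{x\in\Upsilon: y\notin\Upsilon\text{ for all }y<x\}$, the past $\Upsilon_-=\{x\in S\setminus\Upsilon:\exists y\in\Upsilon,\ x<y\}$, the future $\Upsilon_+=\{x\in S\setminus\Upsilon:\exists y\in\Upsilon,\ x>y\}$, and the outer time $\Upsilon^*=\{x\in S: x\text{ is comparable with no }y\in\Upsilon\}$. Standing assumptions: for every $x\in S$, $\max(x_-)$ and $\min(x_+)$ are finite, every $y<x$ satisfies $y\le y_0<x$ for some $y_0\in\max(x_-)$, every $z>x$ satisfies $z\ge z_0>x$ for some $z_0\in\min(x_+)$; and $S$ has no minimal element. A finite set $\Lambda\subset S$ is a time box if $\Lambda_-\cap\Lambda_+=\emptyset$. $\Omega=E^S$ with product $\sigma$-algebra $\mathcal F$; $\mathcal F_\Upsilon$ is generated by coordinates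 in $\Upsilon$. A proper oriented kernel on a time box $\Lambda$ is a map $\gamma_\Lambda:\mathcal F_{S\setminus\Lambda_+}\times\Omega\to[0,1]$ such that (a) $\gamma_\Lambda(\cdot,\omega)$ is a probability measure; (b) $\gamma_\Lambda(A,\cdot)$ is $\mathcal F_{\Lambda_-\cup\Lambda^*}$-measurable for $A\in\mathcal F_{S\setminus\Lambda_+}$; (c) $\gamma_\Lambda(A,\cdot)$ is $\mathcal F_{\Lambda_-}$-measurable for $A\in\mathcal F_\Lambda$; (d) $\gamma_\Lambda(B,\omega)=\mathbf 1_B(\omega)$ for $B\in\mathcal F_{\Lambda_-\cup\Lambda^*}$. A POS is a family $\gamma=(\gamma_\Lambda)$ of proper oriented kernels indexed by all time boxes with $\gamma_\Delta\gamma_\Lambda=\gamma_\Delta$ on $\mathcal F_{S\setminus\Lambda_+}$ whenever $\Lambda\subset\Delta$ (composition $(\gamma_\Delta\gamma_\Lambda)(f\mid\omega)=\int\gamma_\Lambda(f\mid\sigma)\gamma_\Delta(d\sigma,\omega)$). We write $\gamma_y=\gamma_{\{y\}}$ and $\gamma_y f(\omega)=\int f\,d\gamma_y(\cdot,\omega)$. For $\xi,\eta\in\Omega$ and $x\in S$, $\xi\overset{x}{=}\eta$ means $\xi_z=\eta_z$ for all $z\ne x$; $\delta_x(f)=\sup_{\xi\overset{x}{=}\eta}|f(\xi)-f(\eta)|$. A dust-rate matrix is a family $(\alpha_{y,x})_{x\le y}$ of nonnegative reals with $\alpha_{y,y}=0$ and $\delta_x(\gamma_y f)\le\delta_y(f)\,\alpha_{y,x}$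 for all $y\in S$, $x\in y_-$ and all bounded $\mathcal F_{\{y\}}$-measurable $f$. *)

(* Defs.v *)
From HB Require Import structures.
From mathcomp Require Import all_boot all_order all_algebra.
From mathcomp Require Import all_classical all_reals all_analysis.
From mathcomp Require Import measurable_realfun.
Set Implicit Arguments. Unset Strict Implicit. Unset Printing Implicit Defensive.
Import Order.TTheory GRing.Theory Num.Theory.
Local Open Scope classical_set_scope.
Local Open Scope ring_scope.

Section Poset.
Context {disp : Order.disp_t} {S : porderType disp}.

Definition lower (x : S) : set S := [set y | (y < x)%O].
Definition upper (x : S) : set S := [set y | (x < y)%O].
Definition maxs (U : set S) : set S := [set x | U x /\ forall y, (x < y)%O -> ~ U y].
Definition mins (U : set S) : set S := [set x | U x /\ forall y, (y < x)%O -> ~ U y].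
Definition past (U : set S) : set S := [set x | ~ U x /\ exists2 y, U y & (x < y)%O].
Definition future (U : set S) : set S := [set x | ~ U x /\ exists2 y, U y & (y < x)%O].
Definition outer (U : set S) : set S := [set x | forall y, U y -> ~~ (x >=< y)%O].

Definition standing_assumptions : Prop :=
  countable [set: S] /\
  (forall x, finite_set (maxs (lower x)) /\ finite_set (mins (upper x))) /\
  (forall x y, (y < x)%O -> exists2 y0, maxs (lower x) y0 & (y <= y0)%O) /\
  (forall x z, (x < z)%O -> exists2 z0, mins (upper x) z0 & (z0 <= z)%O) /\
  (forall x : S, exists y : S, (y < x)%O).

Definition timebox (L : set S) : Prop := finite_set L /\ past L `&` future L = set0.

End Poset.

Section Config.
Context {disp : Order.disp_t} {S : porderType disp} {E : pointedType}.

Definition cyl (U : set S) : set (set (S -> E)) :=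
  [set A | exists z e, U z /\ A = [set w | w z = e]].

(* Omega = E^S equipped with the sigma-algebra F_U *)
Definition FT (U : set S) := g_sigma_algebraType (cyl U).

Definition Fmeasurable (U : set S) (A : set (S -> E)) : Prop :=
  measurable (A : set (FT U)).

Definition agree_off (x : S) (xi eta : S -> E) : Prop := forall z, z != x -> xi z = eta z.

Definition osc {R : realType} (x : S) (f : (S -> E) -> R) : \bar R :=
  ereal_sup [set r | exists xi eta, agree_off x xi eta /\ r = (`|f xi - f eta|)%:E].

Definition bounded_cfg {R : realType} (f : (S -> E) -> R) : Prop :=
  exists M : R, forall w, `|f w| <= M.

(* a kernel family: gamma L w is the probability measure gamma_L(., w)
   on (Omega, F_{S \ L_+}) *)
Definition kernel_family (R : realType) :=
  forall L : set S, (S -> E) -> {measure set (FT (~` future L)) -> \bar R}.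

Definition proper_oriented_kernel {R : realType} (L : set S)
  (g : (S -> E) -> {measure set (FT (~` future L)) -> \bar R}) : Prop :=
  (forall w, g w setT = 1%E) /\
  (forall A : set (S -> E), Fmeasurable (~` future L) A ->
     measurable_fun [set: FT (past L `|` outer L)] (fun w : FT (past L `|` outer L) => (g w A : \bar R))) /\
  (* (c) *)
  (forall A : set (S -> E), Fmeasurable L A ->
     measurable_fun [set: FT (past L)] (fun w : FT (past L) => (g w A : \bar R))) /\
  (* (d) *)
  (forall B : set (S -> E), Fmeasurable (past L `|` outer L) B ->
     forall w, g w B = (\1_B w)%:E).

Definition kact {R : realType} (gamma : kernel_family R) (L : set S)
  (f : (S -> E) -> R) (w : S -> E) : R :=
  fine (\int[gamma L w]_s (f s)%:E).

Definition POS {R : realType} (gamma : kernel_family R) : Prop :=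
  (forall L, timebox L -> proper_oriented_kernel (gamma L)) /\
  (forall L D, timebox L -> timebox D -> L `<=` D ->
     forall A : set (S -> E),
       Fmeasurable (~` future L) A -> Fmeasurable (~` future D) A ->
       forall w, (\int[gamma D w]_s gamma L s A)%E = gamma D w A).

Definition dust_rate {R : realType} (gamma : kernel_family R) (alpha : S -> S -> R) : Prop :=
  (forall x y, (x <= y)%O -> 0 <= alpha y x) /\
  (forall y, alpha y y = 0) /\
  (forall y x, (x < y)%O ->
     forall f : (S -> E) -> R, bounded_cfg f ->
       measurable_fun [set: FT [set y]] (f : FT [set y] -> R) ->
       (osc x (kact gamma [set y] f) <= osc y f * (alpha y x)%:E)%E).

End Config.

(* Main.v *)
Require Import Defs.
From HB Require Import structures.
From mathcomp Require Import all_boot all_order all_algebra.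
From mathcomp Require Import all_classical all_reals all_analysis.
From mathcomp Require Import measurable_realfun.
Import Order.TTheory GRing.Theory Num.Theory.
Local Open Scope classical_set_scope.
Local Open Scope ring_scope.
Set Implicit Arguments. Unset Strict Implicit. Unset Printing Implicit Defensive.

Lemma cbigcup_nat (T X : Type) (hT : countable [set: T]) (P : set T) (F : T -> set X) :
  exists G : nat -> set X, \bigcup_(t in P) F t = \bigcup_n G n /\
    forall n, G n = set0 \/ exists2 t, P t & G n = F t.
Proof.
have /countable_injP [f finj] := hT.
exists (fun n => \bigcup_(t in [set t | P t /\ f t = n]) F t); split.
  apply/seteqP; split=> [w [t Pt Ftw]|w [n _ [t [Pt _] Ftw]]].
    by exists (f t) => //; exists t.
  by exists t.
move=> n; have [[t [Pt ftn]]|none] := pselect (exists t, P t /\ f t = n).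
  right; exists t => //; apply/seteqP; split=> [w [t' [Pt' ft'n] Fw]|w Fw].
    have tt' : t' = t by apply: finj; rewrite ?in_setT // ft'n ftn.
    by rewrite -tt'.
  by exists t.
left; apply/seteqP; split=> [w [t [Pt ftn] _]|w //].
by exfalso; apply: none; exists t.
Qed.

Lemma cbigcup_meas (T : Type) (hT : countable [set: T]) d (X : measurableType d)
  (P : set T) (F : T -> set X) :
  (forall t, P t -> measurable (F t)) -> measurable (\bigcup_(t in P) F t).
Proof.
move=> mF; have [G [-> HG]] := cbigcup_nat hT P F.
apply: bigcupT_measurable => n; case: (HG n) => [->//|[t Pt ->]]; exact: mF.
Qed.

Lemma cbigcup_negl (T : Type) (hT : countable [set: T]) d (X : measurableType d)
  (R : realType) (mu : {measure set X -> \bar R})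
  (P : set T) (F : T -> set X) :
  (forall t, P t -> mu.-negligible (F t)) -> mu.-negligible (\bigcup_(t in P) F t).
Proof.
move=> mF; have [G [-> HG]] := cbigcup_nat hT P F.
apply: negligible_bigcup => n; case: (HG n) => [->|[t Pt ->]].
  exact: negligible_set0.
exact: mF.
Qed.

Section Gen.
Context {disp : Order.disp_t} {S : porderType disp} {E : pointedType}.

Definition agU (U : set S) (w w' : S -> E) := forall z, U z -> w z = w' z.

Lemma sat_meas (U : set S) (A : set (S -> E)) :
  measurable (A : set (FT U)) -> forall w w', agU U w w' -> A w -> A w'.
Proof.
move=> mA.
suff : [set B : set (S -> E) | forall w w', agU U w w' -> (B w <-> B w')] A.
  by move=> h w w' ww' Aw; have /(_ w w' ww') [+ _] := h; apply.
apply: (smallest_sub _ _ mA).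
  split.
  - by move=> w w' _.
  - by move=> B HB w w' ww'; rewrite /setD /=; have := HB w w' ww'; tauto.
  - move=> B HB w w' ww'; split=> -[n _ Bn]; exists n => //.
      by have [+ _] := HB n w w' ww'; apply.
    by have [_ +] := HB n w w' ww'; apply.
move=> B [z [e [Uz ->]]] w w' ww' /=; rewrite ww' //.
Qed.

Lemma meas_fun_const (U : set S) d' (T : measurableType d') (g : FT U -> T) :
  (forall t : T, measurable [set t]) -> measurable_fun [set: FT U] g ->
  forall w w', agU U w w' -> g w = g w'.
Proof.
move=> hs mg w w' ww'.
have := mg measurableT [set g w] (hs _); rewrite setTI => mpre.
by have := @sat_meas U _ mpre w w' ww' erefl.
Qed.

Lemma cyl_meas (U : set S) z (e : E) : U z ->
  measurable ([set w : S -> E | w z = e] : set (FT U)).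
Proof. by move=> Uz; apply: sub_sigma_algebra; exists z, e. Qed.

Lemma meas_sub (U V : set S) (A : set (S -> E)) : U `<=` V ->
  measurable (A : set (FT U)) -> measurable (A : set (FT V)).
Proof.
move=> UV mA; apply: (smallest_sub _ _ mA) => //.
  exact: smallest_sigma_algebra.
by move=> B [z [e [Uz ->]]]; apply: sub_sigma_algebra; exists z, e; split=> //; apply: UV.
Qed.

Lemma meas_coord (hE : countable [set: E]) (U : set S) y d' (T : measurableType d')
  (k : E -> T) : U y -> measurable_fun [set: FT U] (fun w : FT U => k (w y)).
Proof.
move=> Uy _ Y mY; rewrite setTI.
have -> : (fun w : FT U => k (w y)) @^-1` Y =
   \bigcup_(e in [set e | Y (k e)]) [set w : S -> E | w y = e].
  by apply/seteqP; split=> [w /= Yw|w [e /= Ye wy]]; [exists (w y)|by rewrite /= wy].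
apply: cbigcup_meas => // e _; exact: cyl_meas.
Qed.

End Gen.

Section K.
Context {disp : Order.disp_t} {S : porderType disp} {E : pointedType} {R : realType}.
Variables (gamma : @kernel_family disp S E R) (Hgamma : POS gamma)
  (hE : countable [set: E]) (hS : countable [set: S]) (y : S).

Definition upd (w : S -> E) (e : E) : S -> E := fun z => if z == y then e else w z.

Lemma tb_y : timebox [set y].
Proof.
split; first exact: finite_set1.
apply/seteqP; split=> z // [[_ [a /= -> za]] [_ [b /= -> yb]]].
by have := lt_trans za yb; rewrite ltxx.
Qed.

Lemma poky : proper_oriented_kernel (gamma [set y]).
Proof. exact: Hgamma.1 _ tb_y. Qed.

Lemma notfut z : ~ future [set y] z -> z = y \/ (past [set y] `|` outer [set y]) z.
Proof.
move=> nf; have [->|zy] := eqVneq z y; [by left | right].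
have [zly|nzly] := boolP (z < y)%O.
  by left; split; [move=> /= /eqP; rewrite (negbTE zy) | exists y].
have [ylz|nylz] := boolP (y < z)%O.
  by exfalso; apply: nf; split; [move=> /= /eqP; rewrite (negbTE zy) | exists y].
right => y0 /= ->; apply/negP => /orP[]; rewrite le_eqVlt.
  by rewrite (negbTE zy) (negbTE nzly).
by rewrite eq_sym (negbTE zy) (negbTE nylz).
Qed.

Lemma y_notfut : (~` future [set y]) y.
Proof. by move=> [/= ]. Qed.

Lemma L2 (f : (S -> E) -> R)
  (mf : measurable_fun [set: FT (~` future [set y])] (f : FT (~` future [set y]) -> R)) w :
  (\int[gamma [set y] w]_s (f s)%:E = \int[gamma [set y] w]_s (f (upd w (s y)))%:E)%E.
Proof.
have [Pa [Pb [Pc Pd]]] := poky.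
apply: ae_eq_integral => //.
- exact/measurable_EFinP.
- exact: (@meas_coord _ _ _ hE _ y _ _ (fun e => (f (upd w e))%:E) y_notfut).
pose N := \bigcup_(z in past [set y] `|` outer [set y]) [set s : S -> E | s z <> w z].
have negN : (gamma [set y] w).-negligible N.
  apply: cbigcup_negl => // z Pz.
  have Uz : (~` future [set y]) z.
    move=> [_ [b /= -> yz]]; case: Pz => [[_ [a /= -> zy]]|Oz].
      by have := lt_trans zy yz; rewrite ltxx.
    by have := Oz y erefl; rewrite comparable_sym (lt_comparable yz).
  have mC : measurable ([set s : S -> E | s z = w z] : set (FT (~` future [set y]))).
    exact: cyl_meas.
  exists (~` [set s : S -> E | s z = w z]); split => //.
    exact: measurableC.
  rewrite -(setTD [set s : S -> E | s z = w z]) measureD //=; last by rewrite Pa ltry.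
  rewrite setTI Pa (Pd _ (cyl_meas _ Pz)) indicE mem_set //.
  by rewrite subee.
apply: (negligibleS _ negN) => s /= hs.
apply: contrapT => nN; apply: hs => _.
have hc := meas_fun_const (@measurable_set1 R) mf.
congr EFin; apply: (hc s (upd w (s y))) => z Uz.
have [->|zy] := eqVneq z y; first by rewrite /upd eqxx.
rewrite /upd (negbTE zy); apply: contrapT => szw; apply: nN; exists z => //.
by case: (notfut Uz) => // /eqP; rewrite (negbTE zy).
Qed.

End K.

Section Int.
Context d (T : measurableType d) (R : realType) (mu : {measure set T -> \bar R}).
Hypothesis mu1 : mu setT = 1%E.

Lemma integ_bdd (u : T -> R) : measurable_fun setT u ->
  (exists M, forall t, `|u t| <= M) -> mu.-integrable setT (EFin \o u).
Proof.
move=> mu_ [M hM]; apply/integrableP; split; first exact/measurable_EFinP.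
have M0 : (0 <= (`|M| : R)%:E)%E by rewrite lee_fin.
apply: (le_lt_trans (integral_le_bound (`|M|%:E) _ _ M0 _)) => //.
- exact/measurable_EFinP.
- by apply: aeW => t _ /=; rewrite lee_fin (le_trans (hM t)) // ler_norm.
- by rewrite mu1 mule1 ltry.
Qed.

Lemma L4 (u v : T -> R) (mu_ : measurable_fun setT u) (mv : measurable_fun setT v)
  (bu : exists M, forall t, `|u t| <= M) (bv : exists M, forall t, `|v t| <= M)
  (c : \bar R) (hc : forall t, ((`|u t - v t|)%:E <= c)%E) (t0 : T) :
  ((`|fine (\int[mu]_t (u t)%:E) - fine (\int[mu]_t (v t)%:E)|)%:E <= c)%E.
Proof.
have iu := integ_bdd mu_ bu; have iv := integ_bdd mv bv.
have fu : (\int[mu]_t (u t)%:E)%E \is a fin_num by apply: integrable_fin_num.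
have fv : (\int[mu]_t (v t)%:E)%E \is a fin_num by apply: integrable_fin_num.
case: c hc => [r| |] hc; last 2 first.
- exact: leey.
- by have := hc t0; rewrite leNgt ltNye.
rewrite -abse_EFin.
have -> : (fine (\int[mu]_t (u t)%:E) - fine (\int[mu]_t (v t)%:E))%:E =
   (\int[mu]_t ((u t)%:E - (v t)%:E))%E.
  by rewrite integralB_EFin // EFinB !fineK.
apply: (le_trans (le_abse_integral _ _ _)) => //.
  apply: emeasurable_funB; exact/measurable_EFinP.
have r0 : (0 <= r%:E)%E by apply: le_trans (hc t0); rewrite lee_fin.
rewrite -[leRHS]mule1 -mu1; apply: integral_le_bound => //.
  apply: emeasurable_funB; exact/measurable_EFinP.
by apply: aeW => t _; rewrite -EFinB abse_EFin.
Qed.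

End Int.

Section K2.
Context {disp : Order.disp_t} {S : porderType disp} {E : pointedType} {R : realType}.
Variables (gamma : @kernel_family disp S E R) (Hgamma : POS gamma)
  (hE : countable [set: E]) (y : S).

Lemma L5 (k : E -> R) (bk : exists M, forall e, `|k e| <= M) (w w' : S -> E)
  (ag : forall z, (z < y)%O -> w z = w' z) :
  kact gamma [set y] (fun s => k (s y)) w = kact gamma [set y] (fun s => k (s y)) w'.
Proof.
have [Pa [Pb [Pc Pd]]] := poky Hgamma y.
rewrite /kact; congr fine.
pose phi : FT (~` future [set y]) -> FT [set y] := @id (S -> E).
have mphi : measurable_fun setT phi.
  move=> _ Y mY; rewrite setTI; apply: (meas_sub _ mY) => z /= ->; exact: y_notfut.
pose g : FT [set y] -> \bar R := fun s => (k (s y))%:E.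
have mg : measurable_fun setT g := @meas_coord _ _ _ hE [set y] y _ _ (fun e => (k e)%:E) erefl.
have key w0 : (\int[gamma [set y] w0]_s (k (s y))%:E = \int[pushforward (gamma [set y] w0) phi]_s g s)%E.
  rewrite [RHS](integral_pushforward mphi mg) //.
  rewrite preimage_setT.
  have := @integ_bdd _ _ _ _ (Pa w0) (fun s => k (s y)).
  apply.
    exact: (@meas_coord _ _ _ hE (~` future [set y]) y _ _ k (@y_notfut _ _ y)).
  by case: bk => M hM; exists M => s.
rewrite !key; apply: eq_measure_integral => A mA _; rewrite /pushforward.
apply: (meas_fun_const (@emeasurable_set1 R) (Pc _ mA)).
by move=> z [_ [b /= -> zy]]; apply: ag.
Qed.
End K2.
Unset Implicit Arguments. Set Strict Implicit. Set Printing Implicit Defensive.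

Lemma osc_ub {disp : Order.disp_t} {S : porderType disp} {E : pointedType} {R : realType}
  (x : S) (g : (S -> E) -> R) xi eta : agree_off x xi eta ->
  ((`|g xi - g eta|)%:E <= osc x g)%E.
Proof. by move=> ag; apply: ereal_sup_ubound; exists xi, eta. Qed.

Theorem mainTheorem20 (disp : Order.disp_t) (S : porderType disp)
  (E : pointedType) (R : realType)
  (HS : @standing_assumptions disp S) (HE : countable [set: E])
  (gamma : @kernel_family disp S E R) (Hgamma : POS gamma)
  (alpha : S -> S -> R) (Halpha : dust_rate gamma alpha)
  (y x : S) (Hx : ~ (y < x)%O)
  (f : (S -> E) -> R) (Hfb : bounded_cfg f)
  (Hfm : measurable_fun [set: FT (~` future [set y])] (f : FT (~` future [set y]) -> R)) :
  (x = y -> osc x (kact gamma [set y] f) = 0%E) /\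
  (outer [set y] x -> (osc x (kact gamma [set y] f) <= osc x f)%E) /\
  ((x < y)%O ->
     (osc x (kact gamma [set y] f) <= osc x f + osc y f * (alpha y x)%:E)%E).
Proof.
have [hS _] := HS.
have [Pa [Pb [Pc Pd]]] := poky Hgamma y.
pose h (xi : S -> E) := fun s : S -> E => f (upd y xi (s y)).
have [M hM] := Hfb.
have hb xi : exists M, forall s, `|h xi s| <= M by exists M => s; apply: hM.
have hm xi : measurable_fun [set: FT (~` future [set y])] (h xi : FT (~` future [set y]) -> R).
  exact: (@meas_coord _ _ _ HE (~` future [set y]) y _ _ (fun e => f (upd y xi e)) (@y_notfut _ _ y)).
have core w w' : agree_off x w w' ->
   ((`|kact gamma [set y] f w - kact gamma [set y] f w'|)%:E <=
    (`|fine (\int[gamma [set y] w]_s (h w s)%:E) - fine (\int[gamma [set y] w]_s (h w' s)%:E)|)%:E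
    + (`|kact gamma [set y] (h w') w - kact gamma [set y] (h w') w'|)%:E)%E.
  move=> ag; rewrite -EFinD lee_fin.
  have e1 : kact gamma [set y] f w = fine (\int[gamma [set y] w]_s (h w s)%:E).
    by rewrite /kact (L2 Hgamma HE hS Hfm).
  have e2 : kact gamma [set y] f w' = kact gamma [set y] (h w') w'.
    by rewrite /kact (L2 Hgamma HE hS Hfm).
  rewrite e1 e2; exact: ler_distD.
have T1 w w' : agree_off x w w' ->
   ((`|fine (\int[gamma [set y] w]_s (h w s)%:E) - fine (\int[gamma [set y] w]_s (h w' s)%:E)|)%:E
    <= osc x f)%E.
  move=> ag; apply: (L4 (Pa w) (hm w) (hm w') (hb w) (hb w')) => // s.
  apply: osc_ub => z zx; rewrite /upd; case: ifP => // _; exact: ag.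
have T2 w w' : agree_off x w w' -> ~ (x < y)%O ->
   kact gamma [set y] (h w') w = kact gamma [set y] (h w') w'.
  move=> ag nxy; apply: (L5 Hgamma HE (k := fun e => f (upd y w' e))).
    by exists M => e; apply: hM.
  move=> z zy; apply: ag; apply/negP => /eqP zx; apply: nxy; rewrite -zx.
  exact: zy.
have T3 w w' : agree_off x w w' -> (x < y)%O ->
  ((`|kact gamma [set y] (h w') w - kact gamma [set y] (h w') w'|)%:E
    <= osc y f * (alpha y x)%:E)%E.
  move=> ag xy; have [a0 [_ Hd]] := Halpha.
  apply: (le_trans (@osc_ub _ _ _ _ x (kact gamma [set y] (h w')) _ _ ag)).
  have hb' : bounded_cfg (h w') by exists M => s; apply: hM.
  apply: (le_trans (Hd y x xy (h w') hb'
     (@meas_coord _ _ _ HE [set y] y _ _ (fun e => f (upd y w' e)) erefl))).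
  apply: lee_wpmul2r; first by rewrite lee_fin; apply: a0; exact: ltW.
  apply: ge_ereal_sup => r [xi [eta [ag' ->]]].
  by apply: osc_ub => z zy; rewrite /upd (negbTE zy).
split; [move=> xy0 | split; [move=> Ho | move=> xy]].
- apply/eqP; rewrite eq_le; apply/andP; split.
  + apply: ge_ereal_sup => r [w [w' [ag ->]]]; apply: le_trans (core _ _ ag) _.
    have h0 : h w = h w'.
      apply/funext => s; rewrite /h; congr f; apply/funext => z; rewrite /upd.
      by case: eqP => // /eqP zy; apply: ag; rewrite xy0.
    rewrite h0 subrr normr0 (T2 _ _ ag) ?subrr ?normr0 ?adde0 //.
    by rewrite xy0 ltxx.
  + apply: ereal_sup_ubound; exists point, point; split => //.
    by rewrite subrr normr0.
- have nxy : ~ (x < y)%O.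
    by move=> xy; have := Ho y erefl; rewrite lt_comparable.
  apply: ge_ereal_sup => r [w [w' [ag ->]]]; apply: le_trans (core _ _ ag) _.
  by rewrite (T2 _ _ ag nxy) subrr normr0 adde0; exact: T1.
- apply: ge_ereal_sup => r [w [w' [ag ->]]]; apply: le_trans (core _ _ ag) _.
  by apply: leeD; [exact: T1 | exact: T3].
Qed.
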